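(* Let $(\sigma,b,g_0,g_1)$ be admissible parameters. If condition (2.e) below holds, then condition (2.d) below holds.
   Context: Let $E$, $U_0$, $U_1$ be separable topological spaces whose topologies are defined by complete metrics, and let $\pi,\mu_0,\mu_1$ be $\sigma$-finite Borel measures on $E,U_0,U_1$. $\mathbb{R}_+=[0,\infty)$. Parameters $(\sigma,b,g_0,g_1)$ are admissible if: $b:\mathbb{R}_+\to\mathbb{R}$ is continuous with $b(0)\ge0$; $\sigma:\mathbb{R}_+\times E\to\mathbb{R}$ is Borel with $\sigma(0,u)=0$; $g_0:\mathbb{R}_+\times U_0\to\mathbb{R}$ is Borel with $g_0(0,u)=0$ and $g_0(x,u)+x\ge0$ for $x>0$; $g_1:\mathbb{R}_+\times U_1\to\mathbb{R}$ is Borel with $g_1(x,u)+x\ge0$ for $x\ge0$. Let $l_0(x,y,u)=g_0(x,u)-g_0(y,u)$. (2.d): for each $m\ge1$ there is a nonnegative nondecreasing function $\rho_m$ on $\mathbb{R}_+$ with $\int_{0+}\rho_m(z)^{-2}dz=\infty$, $\int_E|\sigma(x,u)-\sigma(y,u)|^2\pi(du)\le\rho_m(|x-y|)^2$, and $\int_{U_0}\mu_0(du)\int_0^1\frac{l_0(x,y,u)^2(1-t)1_{\{|l_0(x,y,u)|\le n\}}}{\rho_m(|(x-y)+t\,l_0(x,y,u)|)^2}dt\le c(m,n)$ for every $n\ge1$ and $0\le x,y\le m$, with constants $c(m,n)\ge0$. (2.e): for each $u\in U_0$ the function $x\mapsto g_0(x,u)$ is nondecreasing, and for each $m\ge1$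 there is a nonnegative nondecreasing function $\rho_m$ on $\mathbb{R}_+$ with $\int_{0+}\rho_m(z)^{-2}dz=\infty$ and $\int_E|\sigma(x,u)-\sigma(y,u)|^2\pi(du)+\int_{U_0}|l_0(x,y,u)|\wedge|l_0(x,y,u)|^2\mu_0(du)\le\rho_m(|x-y|)^2$ for all $0\le x,y\le m$. *)

(* Defs.v *)
From HB Require Import structures.
From mathcomp Require Import all_boot all_order all_algebra.
From mathcomp Require Import all_classical all_reals all_analysis.
Set Implicit Arguments. Unset Strict Implicit. Unset Printing Implicit Defensive.
Import Order.TTheory GRing.Theory Num.Theory.
Import numFieldNormedType.Exports.
Local Open Scope classical_set_scope.
Local Open Scope ring_scope.

(* Standing assumption on the spaces E, U_0, U_1: a measurable space whose
   sigma-algebra is the Borel sigma-algebra of a complete separable metric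
   (i.e. the Borel space of a Polish space). *)

Definition is_metric (R : realType) (T : Type) (dist : T -> T -> R) : Prop :=
  (forall x y, 0 <= dist x y) /\
  (forall x y, dist x y = 0 <-> x = y) /\
  (forall x y, dist x y = dist y x) /\
  (forall x y z, dist x z <= dist x y + dist y z).

Definition metric_complete (R : realType) (T : Type) (dist : T -> T -> R) : Prop :=
  forall u : nat -> T,
    (forall eps : R, 0 < eps -> exists N : nat, forall p q : nat,
        (N <= p)%N -> (N <= q)%N -> dist (u p) (u q) < eps) ->
    exists l : T, forall eps : R, 0 < eps -> exists N : nat, forall p : nat,
        (N <= p)%N -> dist (u p) l < eps.

Definition metric_separable (R : realType) (T : Type) (dist : T -> T -> R) : Prop :=
  exists D : set T, countable D /\
    forall (x : T) (eps : R), 0 < eps -> exists2 y, D y & dist x y < eps.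

Definition metric_open (R : realType) (T : Type) (dist : T -> T -> R) (A : set T) : Prop :=
  forall x, A x -> exists2 eps : R, 0 < eps & forall y, dist x y < eps -> A y.

Definition polish_borel (R : realType) d (T : measurableType d) : Prop :=
  exists dist : T -> T -> R,
    [/\ is_metric dist, metric_complete dist, metric_separable dist &
        (@measurable d T) = <<s [set A | metric_open dist A] >>].

(* Admissible parameters (sigma, b, g0, g1).  Functions on R_+ x X are
   represented as functions R -> X -> R; only their values at x >= 0 matter. *)

Definition admissible (R : realType)
    dE (E : measurableType dE) d0 (U0 : measurableType d0)
    d1 (U1 : measurableType d1)
    (sigma : R -> E -> R) (b : R -> R) (g0 : R -> U0 -> R) (g1 : R -> U1 -> R)
    : Prop :=
  [/\ {within [set x : R | 0 <= x], continuous b} /\ 0 <= b 0,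
      measurable_fun ([set x : R | 0 <= x] `*` [set: E])
        (fun p : R * E => sigma p.1 p.2) /\ (forall u, sigma 0 u = 0),
      [/\ measurable_fun ([set x : R | 0 <= x] `*` [set: U0])
            (fun p : R * U0 => g0 p.1 p.2),
          (forall u, g0 0 u = 0) &
          (forall x u, 0 < x -> 0 <= g0 x u + x)] &
      measurable_fun ([set x : R | 0 <= x] `*` [set: U1])
        (fun p : R * U1 => g1 p.1 p.2) /\
      (forall x u, 0 <= x -> 0 <= g1 x u + x)].

Definition l0 (R : realType) (U0 : Type) (g0 : R -> U0 -> R) (x y : R) (u : U0) : R :=
  g0 x u - g0 y u.

(* rho is a nonnegative nondecreasing function on R_+ with
   \int_{0+} rho(z)^{-2} dz = infinity (with the convention 1/0 = +oo). *)
Definition osgood_rate (R : realType) (rho : R -> R) : Prop :=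
  [/\ (forall z, 0 <= z -> 0 <= rho z),
      (forall z w, 0 <= z -> z <= w -> rho z <= rho w) &
      (forall eps : R, 0 < eps ->
         (\int[lebesgue_measure]_(z in [set z : R | (0 < z <= eps)%R])
             (((rho z) ^+ 2)%:E)^-1 = +oo)%E)].

(* Condition (2.d).  The quotient in the inner integral is computed in the
   extended reals: a / 0 = +oo for a > 0 and 0 * (+oo) = 0. *)
Definition cond_2d (R : realType)
    dE (E : measurableType dE) d0 (U0 : measurableType d0)
    (pi : {measure set E -> \bar R}) (mu0 : {measure set U0 -> \bar R})
    (sigma : R -> E -> R) (g0 : R -> U0 -> R) : Prop :=
  forall m : nat, (1 <= m)%N ->
  exists rho : R -> R, exists c : nat -> R,
    [/\ osgood_rate rho,
        (forall n : nat, 0 <= c n),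
        (forall x y : R, 0 <= x <= m%:R -> 0 <= y <= m%:R ->
           (\int[pi]_u ((sigma x u - sigma y u) ^+ 2)%:E
              <= ((rho `|x - y|) ^+ 2)%:E)%E) &
        (forall (n : nat) (x y : R), (1 <= n)%N ->
           0 <= x <= m%:R -> 0 <= y <= m%:R ->
           (\int[mu0]_u
              \int[lebesgue_measure]_(t in [set t : R | (0 <= t <= 1)%R])
                 ((l0 g0 x y u ^+ 2 * (1 - t) *
                     (if `|l0 g0 x y u| <= n%:R then 1 else 0))%:E
                  * (((rho `|(x - y) + t * l0 g0 x y u|) ^+ 2)%:E)^-1)
              <= (c n)%:E)%E)].

Definition cond_2e (R : realType)
    dE (E : measurableType dE) d0 (U0 : measurableType d0)
    (pi : {measure set E -> \bar R}) (mu0 : {measure set U0 -> \bar R})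
    (sigma : R -> E -> R) (g0 : R -> U0 -> R) : Prop :=
  (forall u : U0, {homo (fun x => g0 x u) : x y / 0 <= x <= y >-> x <= y}) /\
  forall m : nat, (1 <= m)%N ->
  exists rho : R -> R,
    osgood_rate rho /\
    (forall x y : R, 0 <= x <= m%:R -> 0 <= y <= m%:R ->
       (\int[pi]_u ((sigma x u - sigma y u) ^+ 2)%:E
        + \int[mu0]_u (Num.min `|l0 g0 x y u| (l0 g0 x y u ^+ 2))%:E
          <= ((rho `|x - y|) ^+ 2)%:E)%E).

(* Main.v *)
Require Import Defs.
From HB Require Import structures.
From mathcomp Require Import all_boot all_order all_algebra.
From mathcomp Require Import all_classical all_reals all_analysis.
From mathcomp Require Import lra measurable_realfun.
Import Order.TTheory GRing.Theory Num.Theory.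
Local Open Scope classical_set_scope.
Local Open Scope ring_scope.

Lemma ind_bound (R : realType) (L : R) (n : nat) : (0 < n)%N ->
  L ^+ 2 * (if `|L| <= n%:R then 1 else 0) <= n%:R * Num.min `|L| (L ^+ 2).
Proof.
move=> n1; have n0 : 0 <= n%:R :> R by rewrite ler0n.
case: ifP => hL; last first.
  by rewrite mulr0 mulr_ge0 // le_min normr_ge0 sqr_ge0.
rewrite mulr1 minr_pMr // le_min; apply/andP; split.
  have -> : L ^+ 2 = `|L| * `|L| by rewrite -normrM -expr2 ger0_norm // sqr_ge0.
  by rewrite ler_pM // normr_ge0.
by rewrite ler_peMl ?sqr_ge0 // ler1n.
Qed.

Lemma norm_same_sign (R : realType) (a b : R) : 0 <= a * b -> `|a| <= `|a + b|.
Proof.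
move=> ab.
have [a0|a0] := ltrP 0 a.
  have b0 : 0 <= b by rewrite -(pmulr_rge0 _ a0).
  by rewrite !ger0_norm ?addr_ge0 ?(ltW a0) // lerDl.
have [->|an] := eqVneq a 0; first by rewrite normr0.
have a0' : a < 0 by rewrite lt_neqAle an.
have b0 : b <= 0.
  by rewrite leNgt; apply/negP => b0; move: ab; rewrite leNgt (nmulr_rlt0 _ a0') b0.
by rewrite !ler0_norm ?(ltW a0') //; lra.
Qed.

Section helpers.
Local Open Scope ereal_scope.

Lemma set01 (R : realType) :
  [set t : R | (0 <= t <= 1)%R] = [set` `[0%R, 1%R]].
Proof. by apply/seteqP; split=> t /=; rewrite in_itv. Qed.

Lemma le_integral_nm d (T : measurableType d) (R : realType)
  (mu : {measure set T -> \bar R}) (D : set T) (f g : T -> \bar R) :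
  (forall x, D x -> 0 <= f x) -> (forall x, D x -> f x <= g x) ->
  \int[mu]_(x in D) f x <= \int[mu]_(x in D) g x.
Proof.
move=> f0 fg.
have g0 : forall x, D x -> 0 <= g x by move=> x Dx; exact: le_trans (f0 _ Dx) (fg _ Dx).
rewrite (ge0_integralE _ f0) (ge0_integralE _ g0) /=.
apply: ereal_sup_le => _ [h hf <-]; exists h => //= x.
apply: le_trans (hf x) _; rewrite /patch; case: ifP => // /[!inE] Dx.
exact: fg.
Qed.

Lemma leb01 (R : realType) :
  lebesgue_measure [set t : R | (0 <= t <= 1)%R] = 1.
Proof.
have -> : [set t : R | (0 <= t <= 1)%R] = [set` `[0%R, 1%R]].
  by apply/seteqP; split=> t /=; rewrite in_itv.
by rewrite lebesgue_measure_itv /= lte_fin ltr01 -EFinD subr0.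
Qed.

End helpers.

Theorem proposition2p4 (R : realType)
    (dE : measure_display) (E : measurableType dE)
    (d0 : measure_display) (U0 : measurableType d0)
    (d1 : measure_display) (U1 : measurableType d1)
    (pi : {measure set E -> \bar R}) (mu0 : {measure set U0 -> \bar R})
    (mu1 : {measure set U1 -> \bar R})
    (sigma : R -> E -> R) (b : R -> R) (g0 : R -> U0 -> R) (g1 : R -> U1 -> R) :
  polish_borel R E -> polish_borel R U0 -> polish_borel R U1 ->
  sigma_finite setT pi -> sigma_finite setT mu0 -> sigma_finite setT mu1 ->
  admissible sigma b g0 g1 ->
  cond_2e pi mu0 sigma g0 ->
  cond_2d pi mu0 sigma g0.

Proof.
move=> _ _ _ _ _ _ [_ _ [mg0 g00 _] _] [mono H2e] m m1.
have [rho [[r0 rmon rosg] Hr]] := H2e m m1.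
exists rho, (fun n => n%:R); split => //.
- move=> x y hx hy; apply: le_trans (Hr x y hx hy).
  rewrite leeDl //; apply: integral_ge0 => u _.
  by rewrite lee_fin le_min normr_ge0 sqr_ge0.
move=> n x y n1 hx hy.
set L := l0 g0 x y.
set h := fun u => Num.min `|L u| (L u ^+ 2).
have h0 u : (0 <= h u)%R by rewrite le_min normr_ge0 sqr_ge0.
have hLs u : (0 <= (x - y) * L u)%R.
  rewrite /L /l0; case/andP: hx => x0 _; case/andP: hy => y0 _.
  have [xy|yx] := lerP x y.
    have hg : (g0 x u <= g0 y u)%R by apply: mono; rewrite x0 xy.
    by apply: mulr_le0; rewrite subr_le0.
  have hg : (g0 y u <= g0 x u)%R by apply: mono; rewrite y0 (ltW yx).
  by apply: mulr_ge0; rewrite subr_ge0 // ltW.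
set K := ((n%:R)%:E * ((rho `|x - y| ^+ 2)%:E)^-1)%E.
have K0 : (0 <= K)%E by rewrite mule_ge0 // ?inve_ge0 lee_fin ?ler0n ?sqr_ge0.
have Fnn u t : (0 <= t <= 1)%R ->
   (0 <= (L u ^+ 2 * (1 - t) * (if `|L u| <= n%:R then 1 else 0))%:E /
          (rho `|x - y + t * L u| ^+ 2)%:E)%E.
  case/andP=> t0 t1; rewrite mule_ge0 // ?inve_ge0 lee_fin ?sqr_ge0 //.
  apply: mulr_ge0; last by case: ifP.
  by apply: mulr_ge0; [exact: sqr_ge0 | rewrite subr_ge0].
have Fle u t : (0 <= t <= 1)%R ->
   ((L u ^+ 2 * (1 - t) * (if `|L u| <= n%:R then 1 else 0))%:E /
          (rho `|x - y + t * L u| ^+ 2)%:E <= K * (h u)%:E)%E.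
  case/andP=> t0 t1.
  have [Lu0|Lu0] := eqVneq (L u) 0.
    rewrite Lu0 expr0n /= !mul0r mul0e; apply: mule_ge0 => //; by rewrite lee_fin.
  have hpos : (0 < h u)%R.
    by rewrite /h lt_min normr_gt0 Lu0 lt0r sqr_ge0 andbT sqrf_eq0 Lu0.
  have rr : (rho `|x - y| <= rho `|x - y + t * L u|)%R.
    apply: rmon; first exact: normr_ge0.
    by apply: norm_same_sign; rewrite mulrCA mulr_ge0.
  have [r0'|rpos] := eqVneq (rho `|x - y|) 0.
    have -> : K = +oo%E.
      by rewrite /K r0' expr0n /= inver eqxx gt0_muley // lte_fin ltr0n.
    by rewrite gt0_mulye ?lte_fin // leey.
  have rgt : (0 < rho `|x - y|)%R by rewrite lt0r rpos r0 ?normr_ge0.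
  have rgt' : (0 < rho `|x - y + t * L u|)%R by exact: lt_le_trans rr.
  rewrite /K !inver !sqrf_eq0 (negbTE rpos) gt_eqF // -!EFinM lee_fin.
  set ind := (if `|L u| <= n%:R then 1 else 0)%R.
  have ind0 : (0 <= ind)%R by rewrite /ind; case: ifP.
  have key : (L u ^+ 2 * (1 - t) * ind <= L u ^+ 2 * ind)%R.
    rewrite -mulrA ler_wpM2l ?sqr_ge0 // ler_piMl //; lra.
  have inv : ((rho `|x - y + t * L u| ^+ 2)^-1 <= (rho `|x - y| ^+ 2)^-1)%R.
    rewrite lef_pV2 ?posrE ?exprn_gt0 //.
    rewrite ler_sqr ?nnegrE; [exact: rr | exact: ltW | exact: ltW].
  apply: le_trans (ler_pM _ _ key inv) _.
  - apply: mulr_ge0 => //.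
    by apply: mulr_ge0; [exact: sqr_ge0 | rewrite subr_ge0].
  - by rewrite invr_ge0 sqr_ge0.
  rewrite [X in (_ <= X)%R]mulrAC; apply: ler_wpM2r.
    by rewrite invr_ge0 sqr_ge0.
  exact: ind_bound.
have inner u : (\int[lebesgue_measure]_(t in [set t : R | (0 <= t <= 1)%R])
   ((L u ^+ 2 * (1 - t) * (if `|L u| <= n%:R then 1 else 0))%:E /
          (rho `|x - y + t * L u| ^+ 2)%:E) <= K * (h u)%:E)%E.
  rewrite -[X in (_ <= X)%E]mule1 -[X in (_ <= _ * X)%E](leb01 R) -integral_cst;
    last by rewrite set01; exact: measurable_itv.
  apply: le_integral_nm => t /= t01; [exact: Fnn | exact: Fle].
have mge : measurable [set z : R | (0 <= z)%R].
  have -> : [set z : R | (0 <= z)%R] = [set` `[0%R, +oo[].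
    by apply/seteqP; split=> z /=; rewrite in_itv /= andbT.
  exact: measurable_itv.
have mg z : (0 <= z)%R -> measurable_fun setT (g0 z).
  move=> z0.
  have -> : g0 z = (fun p : R * U0 => g0 p.1 p.2) \o pair z by [].
  apply: (measurable_comp _ _ mg0).
  - exact: measurableX.
  - by move=> _ [u _ <-]; split.
  - exact: pair1_measurable.
have mL : measurable_fun setT L.
  case/andP: hx => x0 _; case/andP: hy => y0 _.
  exact: measurable_realfun.measurable_funB (mg _ x0) (mg _ y0).
have mh : measurable_fun [set: U0] (fun u : U0 => ((h u)%:E : \bar R)).
  apply/measurable_EFinP.
  apply: measurable_realfun.measurable_minr.
    exact: measurableT_comp (@measurable_realfun.normr_measurable R setT) mL.
  exact: measurableT_comp (@measurable_realfun.exprn_measurable R setT 2) mL.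
apply: le_trans.
  apply: (@le_integral_nm _ _ _ mu0 setT _ (fun u => K * (h u)%:E)%E).
  - by move=> u _; apply: integral_ge0 => t /= t01; exact: Fnn.
  - by move=> u _; exact: inner.
rewrite ge0_integralZl //; last by move=> u _; rewrite lee_fin.
have Ih0 : (0 <= \int[mu0]_u (h u)%:E)%E.
  by apply: integral_ge0 => u _; rewrite lee_fin.
have Ih : (\int[mu0]_u (h u)%:E <= (rho `|x - y| ^+ 2)%:E)%E.
  apply: le_trans (Hr x y hx hy); rewrite leeDr //.
  by apply: integral_ge0 => u _; rewrite lee_fin sqr_ge0.
have [r0'|rpos] := eqVneq (rho `|x - y|) 0.
  move: Ih; rewrite r0' expr0n /= => Ih.
  have -> : (\int[mu0]_u (h u)%:E = 0)%E by apply: le_anti; rewrite Ih Ih0.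
  by rewrite mule0 lee_fin ler0n.
apply: le_trans (lee_pmul K0 Ih0 (lexx K) Ih) _.
rewrite /K inver sqrf_eq0 (negbTE rpos).
have E1 : forall a b c : R, (a%:E * b%:E * c%:E = (a * b * c)%:E)%E by [].
rewrite E1 lee_fin divfK ?sqrf_eq0 //.
Qed.
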